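(* Let $k\ge1$, and let $\mathcal P=\{p_1,\dots,p_{k^2}\}$ be a family of real polynomials in the commuting variables $x_1,\dots,x_{2k^2}$ admitting an nc representation $p(X,Y)$ of degree $d>1$. Let $t\ge2$ and suppose $$p(X,Y)=e_1(XY)^t+e_2(YX)^t+e_3X^{2t}+e_4Y^{2t}+q(X,Y),$$ where $q$ contains no scalar multiples of $(XY)^t,(YX)^t,X^{2t},Y^{2t}$, and $e_1,e_2,e_3,e_4$ are pairwise distinct real numbers. Then, counting terms over all polynomials of the family, the family contains: exactly $k^2-k$ terms of the form $e_1x_u^tx_v^t$ with $u\ne v$ if $e_1\ne0$; exactly $k^2-k$ such terms with coefficient $e_2$ if $e_2\ne0$; exactly $k^2-k$ such terms with coefficient $e_3$ if $e_3\ne0$; exactly $k^2-k$ such terms with coefficient $e_4$ if $e_4\ne0$; exactly $k$ such terms with coefficient $\varphi(t,t)$ if $\varphi(t,t)\ne0$; exactly $k$ one letter terms $e_3x_u^{2t}$ if $e_3\ne0$; and exactly $k$ one letter terms $e_4x_u^{2t}$ if $e_4\ne0$. These account for all one letter terms of degree $2t$ and all two letter terms of the form $cx_u^tx_v^t$ ($u\ne v$, $c\ne0$) in the family. Moreover, each of the $k$ polynomials on the diagonal of the array $p(X,Y)$ contains $(\chi(e_1)+\chi(e_2)+\chi(e_3)+\chi(e_4))(k-1)$ terms of the form $cx_u^tx_v^t$ ($u\ne v$) built from off-diagonal entries of $X,Y$ and $\chi(\varphi(t,t))$ such terms built from diagonal entries, as well as exactly one one letter term of degree $2t$ with coefficient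 $e_3$ and exactly one with coefficient $e_4$, whose letters are diagonal entries; and no off-diagonal polynomial of the array contains any term of the form $cx_u^tx_v^t$ with $u\ne v$, $c\ne0$.
   Context: The family $\mathcal P$ admits an nc representation $p(X,Y)$ if there are $k\times k$ matrices $X,Y$ whose $2k^2$ entries are the variables $x_1,\dots,x_{2k^2}$, each used exactly once, and a noncommutative polynomial $p$ in two letters with real coefficients such that the matrix $p(X,Y)$ is a $k\times k$ array whose entries are $p_1,\dots,p_{k^2}$, each exactly once. A ''term'' of a polynomial means a monomial with its nonzero coefficient after collecting like terms. $\varphi(i,j)$ is the sum of coefficients of all monomials of $p$ of degree $i$ in $X$ and $j$ in $Y$. $\chi(a)=1$ if $a\ne0$ and $\chi(a)=0$ if $a=0$. *)

(* Defs.v *)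
From HB Require Import structures.
From mathcomp Require Import all_boot all_order all_algebra.
From mathcomp Require Import reals.
From mathcomp Require Import mpoly.

Set Implicit Arguments.
Unset Strict Implicit.
Unset Printing Implicit Defensive.

Import GRing.Theory Num.Theory.
Local Open Scope ring_scope.

(* A word is a seq bool: true = X, false = Y.  An nc polynomial is a   *)
(* finitely supported coefficient function on words (like terms are    *)
(* thus already collected); [ncbound] bounds the length of the words   *)
(* carrying a nonzero coefficient.                                     *)
Record ncpoly (R : nzRingType) := NCPoly {
  nccoef : seq bool -> R;
  ncbound : nat;
  ncboundP : forall w, (ncbound < size w)%N -> nccoef w = 0 }.

Definition ncdeg (R : nzRingType) (p : ncpoly R) (d : nat) : Prop :=
  (exists w, nccoef p w != 0 /\ size w = d) /\
  (forall w, nccoef p w != 0 -> (size w <= d)%N).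

Definition ncphi (R : nzRingType) (p : ncpoly R) (i j : nat) : R :=
  \sum_(w : (i + j).-tuple bool | count id w == i) nccoef p w.

Definition wXY (t : nat) : seq bool := flatten (nseq t [:: true; false]).
Definition wYX (t : nat) : seq bool := flatten (nseq t [:: false; true]).
Definition wX (t : nat) : seq bool := nseq (2 * t) true.
Definition wY (t : nat) : seq bool := nseq (2 * t) false.

Definition wordmx (S : pzRingType) (k : nat) (X Y : 'M[S]_k) (w : seq bool)
  : 'M[S]_k := foldr (fun b M => (if b then X else Y) *m M) 1%:M w.

Definition nceval (R : comNzRingType) (N k : nat) (p : ncpoly R)
  (X Y : 'M[{mpoly R[N]}]_k) : 'M[{mpoly R[N]}]_k :=
  \sum_(l < (ncbound p).+1) \sum_(w : l.-tuple bool)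
     (nccoef p w)%:MP *: wordmx X Y w.

(* nc representation: the 2k^2 variables x_0..x_(2k^2-1) are placed    *)
(* in X (tag true) and Y (tag false) via a bijection f, each exactly    *)
(* once.                                                               *)
Definition Xmx (R : comNzRingType) (k : nat)
  (f : bool * 'I_k * 'I_k -> 'I_(2 * k ^ 2)) : 'M[{mpoly R[2 * k ^ 2]}]_k :=
  \matrix_(i, j) 'X_(f (true, i, j)).
Definition Ymx (R : comNzRingType) (k : nat)
  (f : bool * 'I_k * 'I_k -> 'I_(2 * k ^ 2)) : 'M[{mpoly R[2 * k ^ 2]}]_k :=
  \matrix_(i, j) 'X_(f (false, i, j)).

Definition tt_uv (N t : nat) (m : 'X_{1..N}) (u v : 'I_N) : bool :=
  (u != v) && [forall l, m l == (if (l == u) || (l == v) then t else 0%N)].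

Definition tt_mon_in (N t : nat) (P : pred 'I_N) (m : 'X_{1..N}) : bool :=
  [exists u, exists v, [&& tt_uv t m u v, P u & P v]].

Definition tt_mon (N t : nat) (m : 'X_{1..N}) : bool := tt_mon_in t predT m.

Definition one_uv (N e : nat) (m : 'X_{1..N}) (u : 'I_N) : bool :=
  [forall l, m l == (if l == u then e else 0%N)].
Definition one_mon (N e : nat) (m : 'X_{1..N}) : bool := [exists u, one_uv e m u].

Definition diag_var (k : nat) (f : bool * 'I_k * 'I_k -> 'I_(2 * k ^ 2))
  (u : 'I_(2 * k ^ 2)) : bool := [exists b, exists a, u == f (b, a, a)].
Definition offdiag_var (k : nat) (f : bool * 'I_k * 'I_k -> 'I_(2 * k ^ 2))
  (u : 'I_(2 * k ^ 2)) : bool :=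
  [exists b, exists i, exists j, (i != j) && (u == f (b, i, j))].

Definition nterms (R : nzRingType) (N : nat) (q : {mpoly R[N]})
  (Q : 'X_{1..N} -> R -> bool) : nat :=
  count (fun m => Q m q@_m) (msupp q).

Definition nterms_mx (R : nzRingType) (N k : nat) (P : 'M[{mpoly R[N]}]_k)
  (Q : 'X_{1..N} -> R -> bool) : nat :=
  \sum_(ij : 'I_k * 'I_k) nterms (P ij.1 ij.2) Q.

Definition chi (R : nzRingType) (a : R) : nat := (a != 0)%B.

(* Main.v *)
Require Import Defs.
From HB Require Import structures.
From mathcomp Require Import all_boot all_order all_algebra.
From mathcomp Require Import reals.
From mathcomp Require Import mpoly.
From mathcomp Require Import zify.
Import GRing.Theory Num.Theory.
Local Open Scope ring_scope.
Set Implicit Arguments.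
Unset Strict Implicit.
Unset Printing Implicit Defensive.

Lemma mcoeffXl (R : comNzRingType) (N : nat) (x : 'I_N) (q : {mpoly R[N]}) m :
  ('X_x * q)@_m = if m x != 0%N then q@_(m - U_(x))%MM else 0.
Proof.
rewrite -(commr_mpolyX _ q).
case: ifP => hm.
  have hle : (U_(x) <= m)%MM by rewrite lep1mP.
  by rewrite -{1}(submK hle) addmC mcoeffMX.
apply/eqP; rewrite mcoeff_eq0; apply/negP; rewrite (perm_mem (msuppMX _ _)).
case/mapP => m' _ hmm; move: hm; rewrite hmm mnmDE mnm1E eqxx.
by [].
Qed.
Section Walks.
Variable R : comNzRingType.
Variable k : nat.
Variable f : bool * 'I_k * 'I_k -> 'I_(2 * k ^ 2).
Hypothesis finj : injective f.
Local Notation N := (2 * k ^ 2)%N.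
Local Notation X := (Xmx R f).
Local Notation Y := (Ymx R f).
Local Notation W w := (wordmx X Y w).

Lemma wordmx_consE b w i j : W (b :: w) i j = \sum_a 'X_(f (b,i,a)) * W w a j.
Proof.
rewrite /wordmx /= mxE; apply: eq_bigr => a _; case: b; by rewrite mxE.
Qed.

Lemma wcoef_cons b w i j m : (W (b::w) i j)@_m =
  \sum_a (if m (f (b,i,a)) != 0%N then (W w a j)@_(m - U_(f (b,i,a)))%MM else 0).
Proof. rewrite wordmx_consE raddf_sum; apply: eq_bigr => a _; exact: mcoeffXl. Qed.

Lemma wcoef_nil i j m : (W [::] i j)@_m = ((i == j) && (m == 0%MM))%:R.
Proof.
rewrite /wordmx /= mxE; case: (i == j) => /=; first by rewrite mcoeff1.
by rewrite mcoeff0.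
Qed.

Lemma wcoef_cons_neq0 b w i j m : (W (b::w) i j)@_m != 0 ->
  exists a, (m (f (b,i,a)) != 0%N) && ((W w a j)@_(m - U_(f (b,i,a)))%MM != 0).
Proof.
rewrite wcoef_cons => H; apply/existsP; move: H; apply: contraR.
rewrite negb_exists => /forallP H; apply/eqP/big1 => a _.
by move: (H a); case: ifP => //= _ /negPn/eqP.
Qed.

Lemma wcoef_nil_neq0 i j m : (W [::] i j)@_m != 0 -> i = j /\ m = 0%MM.
Proof.
rewrite wcoef_nil; case: (i =P j) => [->|]; case: (m =P 0%MM) => //=; by rewrite eqxx.
Qed.

Definition outd (m : 'X_{1..N}) (x : 'I_k) : nat :=
  \sum_(e : bool * 'I_k * 'I_k | (e.1.2 == x) && (e.2 != x)) m (f e).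
Definition ind (m : 'X_{1..N}) (x : 'I_k) : nat :=
  \sum_(e : bool * 'I_k * 'I_k | (e.2 == x) && (e.1.2 != x)) m (f e).

Lemma sum_U e (P : pred (bool * 'I_k * 'I_k)) :
  (\sum_(e' | P e') U_(f e)%MM (f e') = P e)%N.
Proof.
under eq_bigr => e' _ do rewrite mnm1E (inj_eq finj).
case: (boolP (P e)) => Pe.
  rewrite (bigD1 e) //= eqxx big1 // => e' /andP [_ ne].
  by rewrite eq_sym (negbTE ne).
by rewrite big1 // => e' Pe'; case: eqP => // ee; rewrite ee Pe' in Pe.
Qed.

Lemma outdD m1 m2 x : outd (m1 + m2)%MM x = (outd m1 x + outd m2 x)%N.
Proof. by rewrite /outd -big_split; apply: eq_bigr => e _; rewrite mnmDE. Qed.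
Lemma indD m1 m2 x : ind (m1 + m2)%MM x = (ind m1 x + ind m2 x)%N.
Proof. by rewrite /ind -big_split; apply: eq_bigr => e _; rewrite mnmDE. Qed.
Lemma outdU e x : outd U_(f e)%MM x = (e.1.2 == x) && (e.2 != x).
Proof. exact: (sum_U e (fun e => (e.1.2 == x) && (e.2 != x))). Qed.
Lemma indU e x : ind U_(f e)%MM x = (e.2 == x) && (e.1.2 != x).
Proof. exact: (sum_U e (fun e => (e.2 == x) && (e.1.2 != x))). Qed.
Lemma outdM m n x : outd (m *+ n)%MM x = (outd m x * n)%N.
Proof. by rewrite /outd big_distrl; apply: eq_bigr => e _; rewrite mulmnE. Qed.
Lemma indM m n x : ind (m *+ n)%MM x = (ind m x * n)%N.
Proof. by rewrite /ind big_distrl; apply: eq_bigr => e _; rewrite mulmnE. Qed.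
Lemma outd0 x : outd 0%MM x = 0%N.
Proof. by rewrite /outd big1 // => e _; rewrite mnm0E. Qed.
Lemma ind0 x : ind 0%MM x = 0%N.
Proof. by rewrite /ind big1 // => e _; rewrite mnm0E. Qed.

Lemma conserv w i j m : (W w i j)@_m != 0 ->
  forall x, (outd m x + (x == j) = ind m x + (x == i))%N.
Proof.
elim: w i m => [|b w IH] i m.
  by move/wcoef_nil_neq0 => [-> ->] x; rewrite outd0 ind0.
move/wcoef_cons_neq0 => [a /andP [ha hc]] x.
have := IH _ _ hc x.
have hm : m = ((m - U_(f (b,i,a))) + U_(f (b,i,a)))%MM by rewrite submK // lep1mP.
rewrite {3 4}hm outdD indD outdU indU /=.
move: (outd _ x) (ind _ x) => o n.
rewrite (eq_sym i) (eq_sym a).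
case: (x =P i) => hxi; case: (x =P a) => hxa; case: (i =P a) => hia; simpl;
  try (subst; congruence); lia.
Qed.


Lemma mnmB_le m1 m2 (l : 'I_N) : ((m1 - m2)%MM l <= m1 l)%N.
Proof. by rewrite mnmBE leq_subr. Qed.

Lemma loopw w i j m : (W w i j)@_m != 0 ->
  (forall b c, m (f (b,i,c)) != 0%N -> c = i) ->
  forall e, m (f e) != 0%N -> e.1.2 = i.
Proof.
elim: w i m => [|b w IH] i m.
  by move/wcoef_nil_neq0 => [_ ->] _ e; rewrite mnm0E.
move/wcoef_cons_neq0 => [a /andP [ha hc]] Hl.
have ai : a = i by apply: (Hl b).
subst a.
have Hl' : forall b' c, (m - U_(f (b,i,i)))%MM (f (b',i,c)) != 0%N -> c = i.
  move=> b' c hh; apply: (Hl b'); move: hh; apply: contraNneq => h0.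
  by rewrite mnmBE h0.
move=> e he.
case: (boolP ((m - U_(f (b,i,i)))%MM (f e) != 0%N)) => h'.
  exact: (IH _ _ hc Hl').
move: h'; rewrite negbK mnmBE mnm1E (inj_eq finj) subn_eq0.
case: eqP => [<- //|_]; rewrite leqn0 => h0; by rewrite h0 in he.
Qed.

Lemma startw w i j m : (W w i j)@_m != 0 -> m != 0%MM ->
  exists b c, m (f (b,i,c)) != 0%N.
Proof.
case: w => [|b w]; first by move/wcoef_nil_neq0 => [_ ->]; rewrite eqxx.
by move/wcoef_cons_neq0 => [a /andP [ha _]] _; exists b, a.
Qed.

Lemma subU_eq (m : 'X_{1..N}) (u : 'I_N) L :
  ((m u != 0%N) && ((m - U_(u))%MM == L)) = (m == (U_(u) + L)%MM).
Proof.
apply/idP/eqP.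
  by case/andP => h /eqP <-; rewrite addmC submK // lep1mP.
move=> ->; rewrite mnmDE mnm1E eqxx /= addmC addmK eqxx.
by [].
Qed.

Definition lmono (i : 'I_k) (w : seq bool) : 'X_{1..N} :=
  (U_(f (true,i,i)) *+ count id w + U_(f (false,i,i)) *+ count negb w)%MM.

Lemma lmono_cons b w i : lmono i (b :: w) = (U_(f (b,i,i)) + lmono i w)%MM.
Proof.
apply/mnmP => l; rewrite /lmono /= !mnmDE !mulmnE !mnm1E.
case: b => /=; lia.
Qed.

Lemma lmono_nil i : lmono i [::] = 0%MM.
Proof. by apply/mnmP => l; rewrite /lmono /= !mnmDE !mulmnE ?mnm0E !muln0. Qed.

Lemma loopexact w i (m : 'X_{1..N}) :
  (forall l, (forall b, l != f (b,i,i)) -> m l = 0%N) ->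
  (W w i i)@_m = (m == lmono i w)%:R.
Proof.
elim: w m => [|b w IH] m hm.
  by rewrite wcoef_nil eqxx lmono_nil.
rewrite wcoef_cons (bigD1 i) //= big1 => [|c hc]; last first.
  rewrite hm ?eqxx //= => b'; rewrite (inj_eq finj) xpair_eqE /= negb_and.
  by rewrite hc orbT.
rewrite addr0 lmono_cons -subU_eq.
case: ifP => h /=; last by [].
rewrite IH // => l hl; apply/eqP; rewrite -leqn0.
by apply: leq_trans (mnmB_le _ _ _) _; rewrite hm.
Qed.

Fixpoint altw (b1 b2 : bool) n := if n is n'.+1 then b1 :: altw b2 b1 n' else [::].
Fixpoint altend (p q : 'I_k) n := if n is n'.+1 then altend q p n' else p.
Definition altm (u v : 'I_N) n := (U_(u) *+ uphalf n + U_(v) *+ n./2)%MM.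

Lemma altmS u v n : altm u v n.+1 = (U_(u) + altm v u n)%MM.
Proof. apply/mnmP => l; rewrite /altm /= !mnmDE !mulmnE !mnm1E; lia. Qed.
Lemma altm0 u v : altm u v 0 = 0%MM.
Proof. by apply/mnmP => l; rewrite /altm /= !mnmDE !mulmnE ?mnm0E !muln0. Qed.

Lemma altexact w p q lp lq (m : 'X_{1..N}) j : p != q ->
  (forall l, l != f (lp,p,q) -> l != f (lq,q,p) -> m l = 0%N) ->
  (W w p j)@_m = ([&& w == altw lp lq (size w), j == altend p q (size w) &
                     m == altm (f (lp,p,q)) (f (lq,q,p)) (size w)])%:R.
Proof.
elim: w p q lp lq m => [|b w IH] p q lp lq m hpq hm.
  by rewrite wcoef_nil altm0 /= (eq_sym j).
have hne : forall b' c, f (b',p,c) != f (lq,q,p).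
  move=> b' c; rewrite (inj_eq finj); apply/negP => /eqP [_ hp _].
  by rewrite hp eqxx in hpq.
rewrite wcoef_cons (bigD1 q) //= big1 => [|c hc]; last first.
  rewrite hm ?hne //= (inj_eq finj); apply/negP => /eqP [_ hc'].
  by rewrite hc' eqxx in hc.
rewrite addr0 eqseq_cons altmS.
case: (eqVneq b lp) => [->|hb] /=; last first.
  rewrite hm ?hne //= (inj_eq finj); apply/negP => /eqP [hb' ].
  by rewrite hb' eqxx in hb.
rewrite -subU_eq /=.
case: ifP => h /=; last by rewrite !andbF.
rewrite (IH q p lq lp) //; first by rewrite eq_sym.
move=> l h1 h2; apply/eqP; rewrite -leqn0.
by apply: leq_trans (mnmB_le _ _ _) _; rewrite hm.
Qed.

Lemma outd2 e1 e2 n1 n2 x :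
  outd (U_(f e1) *+ n1 + U_(f e2) *+ n2)%MM x =
  (((e1.1.2 == x) && (e1.2 != x)) * n1 + ((e2.1.2 == x) && (e2.2 != x)) * n2)%N.
Proof. by rewrite outdD !outdM !outdU. Qed.
Lemma ind2 e1 e2 n1 n2 x :
  ind (U_(f e1) *+ n1 + U_(f e2) *+ n2)%MM x =
  (((e1.2 == x) && (e1.1.2 != x)) * n1 + ((e2.2 == x) && (e2.1.2 != x)) * n2)%N.
Proof. by rewrite indD !indM !indU. Qed.

Lemma supp2 e1 e2 n1 n2 e :
  (U_(f e1) *+ n1 + U_(f e2) *+ n2)%MM (f e) != 0%N -> e = e1 \/ e = e2.
Proof.
rewrite mnmDE !mulmnE !mnm1E !(inj_eq finj).
case: (e1 =P e) => [->|_]; first by left.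
by case: (e2 =P e) => [->|_]; [right|rewrite /=; lia].
Qed.

Lemma G3nl b1 a1 c1 b2 a2 c2 t w i j : (2 <= t)%N -> a1 != c1 ->
  (W w i j)@_(U_(f (b1,a1,c1)) *+ t + U_(f (b2,a2,c2)) *+ t)%MM != 0 ->
  [/\ a2 = c1, c2 = a1, i = j & (i = a1 \/ i = a2)].
Proof.
move=> ht hac H.
have hc := conserv H.
have h1 := hc a1; rewrite outd2 ind2 /= eqxx (eq_sym c1) (negbTE hac) /= in h1.
have hc2 : c2 = a1.
  move: h1; case: (c2 =P a1) => // _ /=; case: (a1 == j); case: (a1 == i);
  case: (a2 == a1) => /=; lia.
subst c2.
have ha2 : a2 != a1.
  move: h1; rewrite eqxx /=; case: (a2 =P a1) => //= _; case: (a1 == j);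
  case: (a1 == i); lia.
have h2 := hc a2; rewrite outd2 ind2 /= eqxx (eq_sym a1) (negbTE ha2) /= in h2.
have hc1 : c1 = a2.
  move: h2; case: (c1 =P a2) => // _ /=; case: (a2 == j); case: (a2 == i); lia.
subst c1.
have hij : i = j.
  have := hc i; rewrite outd2 ind2 /= eqxx.
  case: (i =P j) => // _; case: (a1 == i); case: (a2 == i) => /=; lia.
split => //.
have [|b [c]] := startw H.
  apply/negP => /eqP /mnmP /(_ (f (b1,a1,a2))).
  by rewrite mnm0E mnmDE !mulmnE mnm1E eqxx /=; lia.
case/supp2 => [[_ <- _]|[_ <- _]]; by [left|right].
Qed.

Lemma G3 b1 a1 c1 b2 a2 c2 t w i j : (2 <= t)%N ->
  (W w i j)@_(U_(f (b1,a1,c1)) *+ t + U_(f (b2,a2,c2)) *+ t)%MM != 0 ->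
  i = j /\ exists b b' x,
    (U_(f (b1,a1,c1)) *+ t + U_(f (b2,a2,c2)) *+ t)%MM =
    (U_(f (b,i,x)) *+ t + U_(f (b',x,i)) *+ t)%MM.
Proof.
move=> ht H.
case: (boolP (a1 != c1)) => [hac|].
  have [-> -> <- [->|->]] := G3nl ht hac H; split => //.
    by exists b1, b2, c1.
  by exists b2, b1, a1; rewrite addmC.
rewrite negbK => /eqP hac; subst c1.
case: (boolP (a2 != c2)) => [hac|].
  rewrite addmC in H.
  have [h1 h2 _ _] := G3nl ht hac H.
  by rewrite -h1 h2 eqxx in hac.
rewrite negbK => /eqP hac; subst c2.
have hij : i = j.
  have := conserv H i; rewrite outd2 ind2 /= !andbN /= eqxx.
  by case: (i =P j).
have hl := loopw H.
have hloop : forall b c, (U_(f (b1,a1,a1)) *+ t + U_(f (b2,a2,a2)) *+ t)%MM (f (b,i,c)) != 0%N -> c = i.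
  by move=> b c /supp2 [[_ <- ->]|[_ <- ->]].
have ha1 : a1 = i.
  by apply: (hl hloop (b1,a1,a1)); rewrite mnmDE !mulmnE mnm1E eqxx /=; lia.
have ha2 : a2 = i.
  by apply: (hl hloop (b2,a2,a2)); rewrite mnmDE !mulmnE !mnm1E eqxx /=; lia.
subst a1 a2; split => //.
by exists b1, b2, i.
Qed.

Lemma G5 b a c n w i j : (2 <= n)%N ->
  (W w i j)@_(U_(f (b,a,c)) *+ n)%MM != 0 ->
  i = j /\ exists b', (U_(f (b,a,c)) *+ n)%MM = (U_(f (b',i,i)) *+ n)%MM.
Proof.
move=> hn H.
have hc := conserv H.
case: (boolP (a != c)) => [hac|].
  have := hc a; rewrite outdM indM outdU indU /= eqxx (eq_sym c) (negbTE hac) /=.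
  case: (a == j); case: (a == i); lia.
rewrite negbK => /eqP hac; subst c.
have hij : i = j.
  have := hc i; rewrite outdM indM outdU indU /= andbN /= eqxx.
  by case: (i =P j).
split => //.
have hloop : forall b' c, (U_(f (b,a,a)) *+ n)%MM (f (b',i,c)) != 0%N -> c = i.
  move=> b' c; rewrite mulmnE mnm1E (inj_eq finj).
  case: ((b,a,a) =P (b',i,c)) => [E|_] /=; last by rewrite ?mul0n.
  by move=> _; case: E => _ h1 h2; congruence.
have := loopw H hloop (e:=(b,a,a)); rewrite /= => -> //.
  by exists b.
by rewrite mulmnE mnm1E eqxx /=; lia.
Qed.

Lemma Pcoef (p : ncpoly R) i j m :
  (nceval p X Y i j)@_m =
  \sum_(l < (ncbound p).+1) \sum_(w : l.-tuple bool) nccoef p w * (W w i j)@_m.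
Proof.
rewrite /nceval summxE raddf_sum; apply: eq_bigr => l _.
rewrite summxE raddf_sum; apply: eq_bigr => w _.
by rewrite mxE; apply: mcoeffCM.
Qed.

Lemma Pcoef_neq0 (p : ncpoly R) i j m : (nceval p X Y i j)@_m != 0 ->
  exists w, (W w i j)@_m != 0.
Proof.
rewrite Pcoef => H.
suff : [exists l : 'I_(ncbound p).+1, [exists w : l.-tuple bool, (W w i j)@_m != 0]].
  by case/existsP => l /existsP [w hw]; exists w.
case: (boolP [exists l : 'I_(ncbound p).+1, [exists w : l.-tuple bool, (W w i j)@_m != 0]]) => // HH.
move: HH; rewrite negb_exists => /forallP HH.
move/eqP: H; case; apply: big1 => l _; apply: big1 => w _.
move: (HH l); rewrite negb_exists => /forallP /(_ w); rewrite negbK => /eqP ->.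
exact: mulr0.
Qed.

Lemma sumw0 (p : ncpoly R) w0 :
  \sum_(l < (ncbound p).+1) \sum_(w : l.-tuple bool)
     nccoef p w * ((tval w == w0) : nat)%:R = nccoef p w0.
Proof.
have inner : forall l, \sum_(w : l.-tuple bool) nccoef p w * ((tval w == w0) : nat)%:R
   = if size w0 == l then nccoef p w0 else 0.
  move=> l; case: (boolP (size w0 == l)) => hs.
    rewrite (bigD1 (Tuple hs)) //= eqxx mulr1 big1 ?addr0 // => w hw.
    case: (tval w =P w0) => [E|_]; last by rewrite mulr0.
    by case/eqP: hw; apply: val_inj; rewrite /= E.
  rewrite big1 // => w _; case: (tval w =P w0) => [E|_]; last by rewrite mulr0.
  by rewrite -E size_tuple eqxx in hs.
under eq_bigr => l _ do rewrite inner.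
case: (leqP (size w0) (ncbound p)) => h.
  have h' : (size w0 < (ncbound p).+1)%N by [].
  rewrite (bigD1 (Ordinal h')) //= eqxx big1 ?addr0 // => l hl.
  rewrite ifN //; apply: contra hl => /eqP e; apply/eqP/val_inj; by rewrite /= e.
rewrite ncboundP // big1 // => l _; rewrite ifN //.
by apply/negP => /eqP e; move: h (ltn_ord l); rewrite e => /leq_trans H /H; rewrite ltnn.
Qed.

Lemma sumcount (p : ncpoly R) a b :
  \sum_(l < (ncbound p).+1) \sum_(w : l.-tuple bool)
     nccoef p w * (((count id w == a) && (count negb w == b)) : nat)%:R
  = \sum_(w : (a + b).-tuple bool | count id w == a) nccoef p w.
Proof.
have cs : forall w : seq bool, (count id w + count negb w)%N = size w.
  by move=> w; rewrite -(count_predC id w).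
have inner : forall l, \sum_(w : l.-tuple bool)
     nccoef p w * (((count id w == a) && (count negb w == b)) : nat)%:R
   = if l == (a + b)%N then \sum_(w : l.-tuple bool | count id w == a) nccoef p w else 0.
  move=> l; case: (boolP (l == (a + b)%N)) => hl.
    rewrite [RHS]big_mkcond; apply: eq_bigr => w _.
    case: (count id w =P a) => ha /=; last by rewrite mulr0.
    have hb : count negb w = b.
      by move: (cs w) (eqP hl); rewrite size_tuple ha; lia.
    by rewrite hb eqxx mulr1.
  rewrite big1 // => w _.
  case: (count id w =P a) => ha /=; last by rewrite mulr0.
  case: (count negb w =P b) => hb /=; last by rewrite mulr0.
  by move: (cs w) hl; rewrite size_tuple ha hb => E /eqP hl'; exfalso; lia.
under eq_bigr => l _ do rewrite inner.
case: (leqP (a + b) (ncbound p)) => h.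
  have h' : ((a + b) < (ncbound p).+1)%N by [].
  rewrite (bigD1 (Ordinal h')) //= eqxx [X in _ + X]big1 ?addr0 // => l hl.
  rewrite ifN //; apply: contra hl => /eqP e; apply/eqP/val_inj; by rewrite /= e.
rewrite big1; last first.
  move=> l _; rewrite ifN //.
  by apply/negP => /eqP e; move: h (ltn_ord l); rewrite e => /leq_trans H /H; rewrite ltnn.
symmetry; apply: big1 => w _; apply: ncboundP; by rewrite size_tuple.
Qed.

Definition mo t b1 b2 i x : 'X_{1..N} := (U_(f (b1,i,x)) *+ t + U_(f (b2,x,i)) *+ t)%MM.

Lemma fTF i : f (true,i,i) != f (false,i,i).
Proof. by rewrite (inj_eq finj). Qed.

Lemma mo_lmono t i w :
  (mo t true false i i == lmono i w) = (count id w == t) && (count negb w == t).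
Proof.
apply/idP/idP => [/eqP /mnmP H|/andP [/eqP h1 /eqP h2]].
  have := H (f (true,i,i)); have := H (f (false,i,i)).
  rewrite /lmono !mnmDE !mulmnE !mnm1E !eqxx !(eq_sym (f (false,i,i))) (negbTE (fTF i)) /=.
  by move=> h1 h2; apply/andP; split; apply/eqP; lia.
by rewrite /mo /lmono h1 h2.
Qed.

Lemma count_nseq (w : seq bool) n b :
  ((count (pred1 b) w == n) && (count (pred1 (~~ b)) w == 0%N)) = (w == nseq n b).
Proof.
elim: w n => [|x w IH] n; first by case: n.
case: n => [|n].
  by rewrite /=; case: x; move: IH; case: b => _ /=; rewrite ?andbF.
rewrite /= eqseq_cons -IH.
by case: x; move: IH; case: b => _ /=; rewrite ?add0n ?add1n ?eqSS ?andbF.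
Qed.

Lemma one_lmono n b i w :
  ((U_(f (b,i,i)) *+ n)%MM == lmono i w) = (w == nseq n b).
Proof.
rewrite -count_nseq.
have E1 : count (pred1 true) w = count id w by apply: eq_count => x; case: x.
have E2 : count (pred1 false) w = count negb w by apply: eq_count => x; case: x.
have hT := fTF i.
have hF : f (false,i,i) != f (true,i,i) by rewrite eq_sym.
case: b => /=; rewrite ?E1 ?E2.
  apply/idP/idP => [/eqP /mnmP H|/andP [/eqP h1 /eqP h2]].
    have := H (f (true,i,i)); have := H (f (false,i,i)).
    rewrite /lmono !mnmDE !mulmnE !mnm1E !eqxx (negbTE hT) (negbTE hF) /=.
    by move=> h1 h2; apply/andP; split; apply/eqP; lia.
  by apply/eqP; rewrite /lmono h1 h2 mulm0n addm0.
apply/idP/idP => [/eqP /mnmP H|/andP [/eqP h1 /eqP h2]].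
  have := H (f (true,i,i)); have := H (f (false,i,i)).
  rewrite /lmono !mnmDE !mulmnE !mnm1E !eqxx (negbTE hT) (negbTE hF) /=.
  by move=> h1 h2; apply/andP; split; apply/eqP; lia.
by apply/eqP; rewrite /lmono h1 h2 mulm0n add0m.
Qed.

Lemma size_altw b1 b2 n : size (altw b1 b2 n) = n.
Proof. by elim: n b1 b2 => //= n IH b1 b2; rewrite IH. Qed.

Lemma altend_double p q n : altend p q n.*2 = p.
Proof. by elim: n => //= n IH; rewrite doubleS /= IH. Qed.

Lemma altm_eq (u v : 'I_N) t l : u != v ->
  ((U_(u) *+ t + U_(v) *+ t)%MM == altm u v l) = (l == t.*2).
Proof.
move=> huv; apply/idP/idP => [/eqP /mnmP H|/eqP ->].
  have := H u; have := H v.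
  rewrite /altm !mnmDE !mulmnE !mnm1E !eqxx (negbTE huv) eq_sym (negbTE huv) /=.
  rewrite uphalf_half => h1 h2.
  apply/eqP; rewrite -[l]odd_double_half.
  move: h1 h2; case: (odd l) => /=; rewrite -!muln2; lia.
by rewrite /altm uphalf_double half_double.
Qed.

Lemma F1 (p : ncpoly R) t i :
  (nceval p X Y i i)@_(mo t true false i i) = ncphi p t t.
Proof.
rewrite Pcoef /ncphi -sumcount; apply: eq_bigr => l _; apply: eq_bigr => w _.
rewrite loopexact ?mo_lmono // => l' hl.
rewrite /mo !mnmDE !mulmnE !mnm1E.
have := hl true; have := hl false.
rewrite !(eq_sym l') => /negbTE -> /negbTE ->; by rewrite !mul0n.
Qed.

Lemma F4 (p : ncpoly R) n b i :
  (nceval p X Y i i)@_(U_(f (b,i,i)) *+ n)%MM = nccoef p (nseq n b).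
Proof.
rewrite Pcoef -sumw0; apply: eq_bigr => l _; apply: eq_bigr => w _.
rewrite loopexact ?one_lmono // => l' hl.
rewrite !mulmnE !mnm1E.
by have := hl b; rewrite (eq_sym l') => /negbTE ->.
Qed.

Lemma F2 (p : ncpoly R) t b1 b2 i x : x != i ->
  (nceval p X Y i i)@_(mo t b1 b2 i x) = nccoef p (altw b1 b2 t.*2).
Proof.
move=> hx.
have huv : f (b1,i,x) != f (b2,x,i).
  by rewrite (inj_eq finj); apply/negP => /eqP [_ h _]; rewrite h eqxx in hx.
rewrite Pcoef -sumw0; apply: eq_bigr => l _; apply: eq_bigr => w _.
rewrite (altexact _ _ (lp := b1) (lq := b2) (q := x)) ?(eq_sym i) //; last first.
  move=> l' h1 h2; rewrite /mo !mnmDE !mulmnE !mnm1E.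
  by rewrite !(eq_sym _ l') (negbTE h1) (negbTE h2).
rewrite altm_eq //.
congr (_ * (nat_of_bool _)%:R).
apply/idP/idP => [/and3P [/eqP hw _ /eqP hs]|/eqP hw].
  by rewrite hw hs.
by rewrite hw size_altw altend_double !eqxx.
Qed.

Lemma mnm2_at (u v l : 'I_N) t : (U_(u) *+ t + U_(v) *+ t)%MM l = (t * (u == l) + t * (v == l))%N.
Proof. by rewrite mnmDE !mulmnE !mnm1E mulnC [X in (_ + X)%N]mulnC. Qed.

Lemma tt_vars (u v a b : 'I_N) t : (0 < t)%N -> u != v ->
  (U_(u) *+ t + U_(v) *+ t)%MM = (U_(a) *+ t + U_(b) *+ t)%MM -> (u == a) || (u == b).
Proof.
move=> ht huv /mnmP /(_ u); rewrite !mnm2_at eqxx (eq_sym v) (negbTE huv) !(eq_sym _ u).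
by case: (u == a); case: (u == b) => //=; lia.
Qed.

Lemma ttE t m (u v : 'I_N) : tt_uv t m u v = (u != v) && (m == (U_(u) *+ t + U_(v) *+ t)%MM).
Proof.
rewrite /tt_uv; case: (eqVneq u v) => [//|huv] /=.
have key : forall l : 'I_N, (if (l == u) || (l == v) then t else 0%N) = (t * (u == l) + t * (v == l))%N.
  move=> l; rewrite (eq_sym u) (eq_sym v).
  case: (eqVneq l u) => [->|h1]; first by rewrite (negbTE huv) /=; lia.
  by case: (l == v) => /=; lia.
apply/forallP/eqP => [H|->].
  by apply/mnmP => l; rewrite mnm2_at -key; apply/eqP.
by move=> l; rewrite mnm2_at key.
Qed.

Lemma oneE e m (u : 'I_N) : one_uv e m u = (m == (U_(u) *+ e)%MM).
Proof.
rewrite /one_uv; apply/forallP/eqP => [H|->].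
  apply/mnmP => l; rewrite mulmnE mnm1E (eq_sym u); move/eqP: (H l) ->.
  by case: (l == u); rewrite ?mul1n.
by move=> l; rewrite mulmnE mnm1E (eq_sym u); case: (l == u); rewrite ?mul1n.
Qed.

Lemma P3 (fsurj : forall u, exists e, u = f e) (p : ncpoly R) t i j m :
  (2 <= t)%N -> tt_mon t m -> (nceval p X Y i j)@_m != 0 ->
  i = j /\ ((m = mo t true false i i) \/ exists b b' x, x != i /\ m = mo t b b' i x).
Proof.
move=> ht /existsP [u /existsP [v /and3P [huv _ _]]].
move: huv; rewrite ttE => /andP [huv /eqP ->] /Pcoef_neq0 [w].
have [[[b1 a1] c1] Eu] := fsurj u; have [[[b2 a2] c2] Ev] := fsurj v.
subst u v => H.
have [hij [b [b' [x E]]]] := G3 ht H; split => //.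
rewrite E; case: (eqVneq x i) => [hx|hx]; last by right; exists b, b', x.
subst x; left.
have hbb : b != b'.
  apply/negP => /eqP hb; subst b'.
  move/mnmP: E => /(_ (f (b1,a1,c1))).
  rewrite /mo !mnm2_at eqxx.
  have -> : (f (b2,a2,c2) == f (b1,a1,c1)) = false by rewrite eq_sym (negbTE huv).
  case: (f (b,i,i) == f (b1,a1,c1)) => /=; lia.
by rewrite /mo; move: E hbb; case: b; case: b' => //= _ _; rewrite addmC.
Qed.

Lemma P5 (fsurj : forall u, exists e, u = f e) (p : ncpoly R) n i j m :
  (2 <= n)%N -> one_mon n m -> (nceval p X Y i j)@_m != 0 ->
  i = j /\ exists b, m = (U_(f (b,i,i)) *+ n)%MM.
Proof.
move=> hn /existsP [u]; rewrite oneE => /eqP -> /Pcoef_neq0 [w].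
have [[[b a] c] ->] := fsurj u => H.
exact: G5 hn H.
Qed.

Lemma nterms_perm (q : {mpoly R[N]}) (Q : 'X_{1..N} -> R -> bool)
    (S : pred 'X_{1..N}) (L : seq 'X_{1..N}) :
  (forall m c, Q m c -> S m) -> uniq L ->
  (forall m, (m \in L) = S m && (q@_m != 0)) ->
  nterms q Q = count (fun m => Q m q@_m) L.
Proof.
move=> HQ uL HL; rewrite /nterms.
have -> : count (fun m => Q m q@_m) (msupp q) =
          count (fun m => Q m q@_m) [seq m <- msupp q | S m].
  rewrite count_filter; apply: eq_count => m /=.
  by case h: (Q m q@_m) => //=; rewrite (HQ _ _ h).
have Hp : perm_eq [seq m <- msupp q | S m] L.
  apply: uniq_perm => //; first by rewrite filter_uniq // msupp_uniq.
  by move=> m; rewrite mem_filter HL mcoeff_msupp andbC.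
exact: (permP Hp).
Qed.

Lemma count_sum (T : eqType) (a : pred T) (s : seq T) : count a s = (\sum_(x <- s) a x)%N.
Proof. by elim: s => [|x s IH]; rewrite ?big_nil ?big_cons //= IH. Qed.

Lemma mo_inj t b1 b2 x b1' b2' x' i : (0 < t)%N -> x != i ->
  mo t b1 b2 i x = mo t b1' b2' i x' -> [/\ b1 = b1', b2 = b2' & x = x'].
Proof.
move=> ht hx E.
have h1 : f (b1',i,x') == f (b1,i,x).
  move/mnmP: E => /(_ (f (b1,i,x))); rewrite /mo !mnm2_at eqxx.
  have -> : f (b2',x',i) == f (b1,i,x) = false.
    by rewrite (inj_eq finj); apply/negP => /eqP [_ h h']; rewrite h' eqxx in hx.
  by case: (f (b1',i,x') == f (b1,i,x)) => //=; lia.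
move: h1; rewrite (inj_eq finj) => /eqP [hb hx']; subst b1' x'.
have h2 : f (b2',x,i) == f (b2,x,i).
  move/mnmP: E => /(_ (f (b2,x,i))); rewrite /mo !mnm2_at eqxx.
  have -> : f (b1,i,x) == f (b2,x,i) = false.
    by rewrite (inj_eq finj); apply/negP => /eqP [_ h h']; rewrite h eqxx in hx.
  by case: (f (b2',x,i) == f (b2,x,i)) => //=; lia.
by move: h2; rewrite (inj_eq finj) => /eqP [->].
Qed.

Lemma tt_mo t b1 b2 i x : ((b1, i, x) != (b2, x, i)) -> tt_mon t (mo t b1 b2 i x).
Proof.
move=> h; apply/existsP; exists (f (b1,i,x)); apply/existsP; exists (f (b2,x,i)).
by rewrite ttE (inj_eq finj) h eqxx.
Qed.

Definition cw (p : ncpoly R) t (bb : bool * bool) := nccoef p (altw bb.1 bb.2 t.*2).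

Lemma masterTT (fsurj : forall u, exists e, u = f e) (p : ncpoly R) t i
    (Q : 'X_{1..N} -> R -> bool) (Qoff Qdiag : R -> bool) :
  (2 <= t)%N -> (forall m c, Q m c -> tt_mon t m) ->
  (forall b1 b2 x c, x != i -> Q (mo t b1 b2 i x) c = Qoff c) ->
  (forall c, Q (mo t true false i i) c = Qdiag c) ->
  nterms (nceval p X Y i i) Q =
    ((ncphi p t t != 0%R) && Qdiag (ncphi p t t) +
     k.-1 * \sum_(bb : bool * bool) ((cw p t bb != 0%R) && Qoff (cw p t bb)))%N.
Proof.
move=> ht HQ Hoff Hdiag.
set q := nceval p X Y i i.
set ph := ncphi p t t.
pose ok (kk : (bool * bool) * 'I_k) :=
  if kk.2 == i then (kk.1 == (true,false)) && (ph != 0) else cw p t kk.1 != 0.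
pose Fk (kk : (bool * bool) * 'I_k) := mo t kk.1.1 kk.1.2 i kk.2.
have ht0 : (0 < t)%N by lia.
have coefk : forall kk, ok kk -> q@_(Fk kk) = if kk.2 == i then ph else cw p t kk.1.
  move=> [[b1 b2] x]; rewrite /ok /Fk /=.
  case: (eqVneq x i) => [->|hx] /=.
    by case/andP => /eqP [-> ->] _; rewrite F1.
  by move=> _; rewrite F2.
rewrite (@nterms_perm _ _ (tt_mon t) (map Fk [seq kk <- enum {: (bool * bool) * 'I_k} | ok kk])) //.
- rewrite count_map count_filter count_sum big_enum /=.
  rewrite -(pair_big xpredT xpredT (fun bb x => ((Q (Fk (bb, x)) q@_(Fk (bb, x))) && ok (bb, x) : nat))) /=.
  have inner : forall bb : bool * bool,
    (\sum_(x < k) ((Q (Fk (bb, x)) q@_(Fk (bb, x))) && ok (bb, x) : nat) =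
     ((bb == (true,false)) && ((ph != 0%R) && Qdiag ph)) + k.-1 * ((cw p t bb != 0%R) && Qoff (cw p t bb)))%N.
    move=> bb; rewrite (bigD1 i) //=; congr (_ + _)%N.
      rewrite /ok /= eqxx.
      case: (eqVneq bb (true,false)) => [E|] /=; last by rewrite andbF.
      case: (eqVneq ph 0) => [->|hph] /=; first by rewrite andbF.
      rewrite andbT coefk; last by rewrite /ok /= eqxx E /= hph.
      by rewrite /= eqxx /Fk E /= Hdiag.
    rewrite (eq_bigr (fun _ => ((cw p t bb != 0%R) && Qoff (cw p t bb) : nat))).
      by rewrite sum_nat_const cardC1 card_ord mulnC.
    move=> x hx; rewrite /ok /= (negbTE hx).
    case: (eqVneq (cw p t bb) 0) => [->|hc]; first by rewrite ?eqxx /= ?andbF.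
    rewrite /= andbT coefk /ok /= (negbTE hx) //=.
    by rewrite /Fk Hoff.
  rewrite (eq_bigr _ (fun bb _ => inner bb)) big_split /= -big_distrr /=.
  congr (_ + _)%N.
  rewrite (bigD1 (true,false)) //= big1 ?addn0 // => bb /negbTE -> //.
- rewrite map_inj_in_uniq; first by rewrite filter_uniq // enum_uniq.
  move=> [[b1 b2] x] [[b1' b2'] x']; rewrite !mem_filter /ok /Fk /= => /andP [o1 _] /andP [o2 _].
  case: (eqVneq x i) o1 => [->|hx] o1; case: (eqVneq x' i) o2 => [->|hx'] o2.
  + by move: o1 o2 => /andP [/eqP [-> ->] _] /andP [/eqP [-> ->] _].
  + by move=> E; have [_ _ E'] := mo_inj ht0 hx' (esym E); rewrite E' eqxx in hx'.
  + by move=> E; have [_ _ E'] := mo_inj ht0 hx E; rewrite -E' eqxx in hx.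
  + by move=> E; have [-> -> ->] := mo_inj ht0 hx E.
- move=> m; apply/idP/idP.
    case/mapP => [[[b1 b2] x]]; rewrite mem_filter => /andP [o _] ->.
    rewrite coefk //; move: o; rewrite /ok /Fk /=.
    case: (eqVneq x i) => [->|hx] /=.
      case/andP => /eqP [-> ->] ->; rewrite andbT; apply: tt_mo.
      by rewrite !xpair_eqE.
    move=> ->; rewrite andbT; apply: tt_mo.
    by rewrite !xpair_eqE negb_and (negbT (negbTE hx)) orbT.
  case/andP => htt hc.
  have [_ [E|[b1 [b2 [x [hx E]]]]]] := P3 fsurj ht htt hc.
    apply/mapP; exists ((true,false), i); last by [].
    by rewrite mem_filter mem_enum /ok /= !eqxx /= andbT; move: hc; rewrite E /q F1.
  apply/mapP; exists ((b1,b2), x); last by [].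
  by rewrite mem_filter mem_enum /ok /= (negbTE hx) /= andbT; move: hc; rewrite E /q F2.
Qed.

Lemma masterOne (fsurj : forall u, exists e, u = f e) (p : ncpoly R) n i
    (Q : 'X_{1..N} -> R -> bool) (Q1 : R -> bool) :
  (2 <= n)%N -> (forall m c, Q m c -> one_mon n m) ->
  (forall b c, Q (U_(f (b,i,i)) *+ n)%MM c = Q1 c) ->
  nterms (nceval p X Y i i) Q =
    (\sum_(b : bool) ((nccoef p (nseq n b) != 0%R) && Q1 (nccoef p (nseq n b))))%N.
Proof.
move=> hn HQ H1.
set q := nceval p X Y i i.
pose ok (b : bool) := nccoef p (nseq n b) != 0%R.
pose G (b : bool) := (U_(f (b,i,i)) *+ n)%MM.
rewrite (@nterms_perm _ _ (one_mon n) (map G [seq b <- enum {: bool} | ok b])) //.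
- rewrite count_map count_filter count_sum big_enum /=.
  apply: eq_bigr => b _; rewrite /G /q F4 H1 andbC.
  by [].
- rewrite map_inj_in_uniq; first by rewrite filter_uniq // enum_uniq.
  move=> b b' _ _ /mnmP /(_ (f (b,i,i))); rewrite /G !mulmnE !mnm1E eqxx (inj_eq finj).
  case: ((b',i,i) =P (b,i,i)) => [[->]|] //= _; lia.
- move=> m; apply/idP/idP.
    case/mapP => b; rewrite mem_filter => /andP [o _] ->.
    rewrite /q /G F4; move: o; rewrite /ok => -> /=; rewrite andbT; apply/existsP; exists (f (b,i,i)).
    by rewrite oneE.
  case/andP => hm hc.
  have [_ [b E]] := P5 fsurj hn hm hc.
  apply/mapP; exists b; last by [].
  by rewrite mem_filter mem_enum andbT /ok; move: hc; rewrite E /q F4.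
Qed.

Lemma offzero (fsurj : forall u, exists e, u = f e) (p : ncpoly R) t n i j
    (Q : 'X_{1..N} -> R -> bool) :
  i != j -> (2 <= t)%N -> (2 <= n)%N ->
  (forall m c, Q m c -> tt_mon t m || one_mon n m) ->
  nterms (nceval p X Y i j) Q = 0%N.
Proof.
move=> hij ht hn HQ.
rewrite (@nterms_perm _ _ (fun m => tt_mon t m || one_mon n m) [::]) //.
move=> m; apply/esym/negP => /andP [/orP [hm|hm] hc].
  by have [E _] := P3 fsurj ht hm hc; rewrite E eqxx in hij.
by have [E _] := P5 fsurj hn hm hc; rewrite E eqxx in hij.
Qed.

Lemma tt_sub t (Pr : pred 'I_N) m : tt_mon_in t Pr m -> tt_mon t m.
Proof.
case/existsP => u /existsP [v /and3P [h _ _]].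
by apply/existsP; exists u; apply/existsP; exists v; rewrite h.
Qed.

Lemma Toff_mo t b1 b2 i x : x != i -> tt_mon_in t (offdiag_var f) (mo t b1 b2 i x).
Proof.
move=> hx; apply/existsP; exists (f (b1,i,x)); apply/existsP; exists (f (b2,x,i)).
rewrite ttE (inj_eq finj) eqxx andbT; apply/and3P; split.
- by apply/negP => /eqP [_ h _]; rewrite h eqxx in hx.
- apply/existsP; exists b1; apply/existsP; exists i; apply/existsP; exists x.
  by rewrite eq_sym hx eqxx.
- apply/existsP; exists b2; apply/existsP; exists x; apply/existsP; exists i.
  by rewrite hx eqxx.
Qed.

Lemma Tdiag_mo t b1 b2 i x : (0 < t)%N -> x != i -> tt_mon_in t (diag_var f) (mo t b1 b2 i x) = false.
Proof.
move=> ht hx; apply/negbTE/negP => /existsP [u /existsP [v /and3P [h hu _]]].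
move: h; rewrite ttE => /andP [huv /eqP E].
have := tt_vars ht huv (esym E).
case/existsP: hu => b /existsP [a /eqP ->].
rewrite !(inj_eq finj).
case/orP => /eqP [_ h1 h2]; rewrite -?h1 -?h2 ?h1 ?h2 eqxx in hx; by [].
Qed.

Lemma Toff_md t i : (0 < t)%N -> tt_mon_in t (offdiag_var f) (mo t true false i i) = false.
Proof.
move=> ht; apply/negbTE/negP => /existsP [u /existsP [v /and3P [h hu _]]].
move: h; rewrite ttE => /andP [huv /eqP E].
have := tt_vars ht huv (esym E).
case/existsP: hu => b /existsP [a /existsP [c /andP [hac /eqP ->]]].
rewrite !(inj_eq finj).
case/orP => /eqP [_ h1 h2]; by rewrite h1 h2 eqxx in hac.
Qed.

Lemma Tdiag_md t i : tt_mon_in t (diag_var f) (mo t true false i i).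
Proof.
apply/existsP; exists (f (true,i,i)); apply/existsP; exists (f (false,i,i)).
rewrite ttE (inj_eq finj) eqxx /=; apply/andP; split.
- by apply/existsP; exists true; apply/existsP; exists i.
- by apply/existsP; exists false; apply/existsP; exists i.
Qed.

Lemma one_G n b i : one_mon n (U_(f (b,i,i)) *+ n)%MM.
Proof. by apply/existsP; exists (f (b,i,i)); rewrite oneE. Qed.

Lemma mx_sum (Pm : 'M[{mpoly R[N]}]_k) (Q : 'X_{1..N} -> R -> bool) D :
  (forall i j, i != j -> nterms (Pm i j) Q = 0%N) ->
  (forall i, nterms (Pm i i) Q = D) -> nterms_mx Pm Q = (k * D)%N.
Proof.
move=> Hoff Hd; rewrite /nterms_mx.
rewrite -(pair_big xpredT xpredT (fun i j => nterms (Pm i j) Q)) /=.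
rewrite (eq_bigr (fun _ => D)); first by rewrite sum_nat_const card_ord.
move=> i _; rewrite (bigD1 i) //= Hd big1 ?addn0 // => j hj.
by apply: Hoff; rewrite eq_sym.
Qed.

Lemma sum_bb (F : bool * bool -> nat) :
  (\sum_(bb : bool * bool) F bb = F (true,true) + F (true,false) + (F (false,true) + F (false,false)))%N.
Proof.
transitivity (\sum_(bb : bool * bool) F (bb.1, bb.2))%N; first by apply: eq_bigr => [[a b]].
by rewrite -(pair_big xpredT xpredT (fun a b => F (a, b))) /= !big_bool /=.
Qed.
End Walks.

Lemma altw_same b n : altw b b n = nseq n b.
Proof. by elim: n => //= n ->. Qed.

Lemma altw_XY t : altw true false t.*2 = wXY t.
Proof. by elim: t => //= t IH; rewrite IH. Qed.
Lemma altw_YX t : altw false true t.*2 = wYX t.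
Proof. by elim: t => //= t IH; rewrite IH. Qed.

Lemma nterms_ext (R : nzRingType) N (q : {mpoly R[N]}) (Q1 Q2 : 'X_{1..N} -> R -> bool) :
  (forall m c, Q1 m c = Q2 m c) -> nterms q Q1 = nterms q Q2.
Proof. by move=> H; apply: eq_count => m; rewrite H. Qed.

Lemma nterms_mx_ext (R : nzRingType) N k (Pm : 'M[{mpoly R[N]}]_k) (Q1 Q2 : 'X_{1..N} -> R -> bool) :
  (forall m c, Q1 m c = Q2 m c) -> nterms_mx Pm Q1 = nterms_mx Pm Q2.
Proof. by move=> H; apply: eq_bigr => ij _; apply: nterms_ext. Qed.

Lemma mul_one (a x : nat) : x = 1%N -> (a * x = a)%N.
Proof. by move=> ->; rewrite muln1. Qed.
Lemma ar1 (a b c d : nat) : (c + a + (b + d) = a + b + c + d)%N.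
Proof. lia. Qed.

Theorem lemma2p8 (R : realType) (k : nat)
  (f : bool * 'I_k * 'I_k -> 'I_(2 * k ^ 2)) (p : ncpoly R) (d t : nat)
  (e1 e2 e3 e4 : R) :
  (1 <= k)%N ->
  bijective f ->
  ncdeg p d -> (1 < d)%N ->
  (2 <= t)%N ->
  nccoef p (wXY t) = e1 -> nccoef p (wYX t) = e2 ->
  nccoef p (wX t) = e3 -> nccoef p (wY t) = e4 ->
  uniq [:: e1; e2; e3; e4] ->
  let P := nceval p (Xmx R f) (Ymx R f) in
  let ph := ncphi p t t in
  let Toff := tt_mon_in t (offdiag_var f) in
  let Tdiag := tt_mon_in t (diag_var f) in
  (* counts over the whole family *)
  [/\ (e1 != 0 -> nterms_mx P (fun m c => Toff m && (c == e1)) = (k ^ 2 - k)%N),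
      (e2 != 0 -> nterms_mx P (fun m c => Toff m && (c == e2)) = (k ^ 2 - k)%N),
      (e3 != 0 -> nterms_mx P (fun m c => Toff m && (c == e3)) = (k ^ 2 - k)%N) &
      (e4 != 0 -> nterms_mx P (fun m c => Toff m && (c == e4)) = (k ^ 2 - k)%N)] /\
  [/\ (ph != 0 -> nterms_mx P (fun m c => Tdiag m && (c == ph)) = k),
      (e3 != 0 -> nterms_mx P (fun m c => one_mon (2 * t) m && (c == e3)) = k) &
      (e4 != 0 -> nterms_mx P (fun m c => one_mon (2 * t) m && (c == e4)) = k)] /\
  (* these account for all one letter terms of degree 2t and all terms
     c x_u^t x_v^t (u <> v) *)
  nterms_mx P (fun m _ => one_mon (2 * t) m) = (chi e3 * k + chi e4 * k)%N /\
  nterms_mx P (fun m _ => tt_mon t m)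
    = ((chi e1 + chi e2 + chi e3 + chi e4) * (k ^ 2 - k) + chi ph * k)%N /\
  (* diagonal polynomials *)
  (forall i : 'I_k,
     [/\ nterms (P i i) (fun m _ => Toff m)
           = ((chi e1 + chi e2 + chi e3 + chi e4) * (k - 1))%N,
         nterms (P i i) (fun m _ => Tdiag m) = chi ph,
         nterms (P i i) (fun m c => one_mon (2 * t) m && (c == e3)) = chi e3,
         nterms (P i i) (fun m c => one_mon (2 * t) m && (c == e4)) = chi e4 &
         (forall m, m \in msupp (P i i) -> one_mon (2 * t) m ->
            exists2 u, one_uv (2 * t) m u & diag_var f u)]) /\
  (* off-diagonal polynomials *)
  (forall i j : 'I_k, i != j -> nterms (P i j) (fun m _ => tt_mon t m) = 0%N).
Proof.
move=> hk fbij hdeg hd ht E1 E2 E3 E4 huniq P ph Toff Tdiag.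
have finj := bij_inj fbij.
have fsurj : forall u, exists e, u = f e.
  by case: fbij => g fK gK u; exists (g u); rewrite gK.
move: huniq; rewrite /= !inE !negb_or => /andP [/and3P [h12 h13 h14] /andP [/andP [h23 h24] /andP [h34 _]]].
have ht0 : (0 < t)%N by lia.
have h2t : (2 <= 2 * t)%N by lia.
have cTT : cw p t (true,true) = e3 by rewrite /cw /= altw_same -E3 /wX mul2n.
have cTF : cw p t (true,false) = e1 by rewrite /cw /= altw_XY.
have cFT : cw p t (false,true) = e2 by rewrite /cw /= altw_YX.
have cFF : cw p t (false,false) = e4 by rewrite /cw /= altw_same -E4 /wY mul2n.
have nT : nccoef p (nseq (2 * t) true) = e3 by [].
have nF : nccoef p (nseq (2 * t) false) = e4 by [].
have TT := masterTT finj fsurj p ht.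
have OO := masterOne finj fsurj p h2t.
have OZ : forall (Q : 'X_{1..(2 * k ^ 2)} -> R -> bool) i j, i != j ->
    (forall m c, Q m c -> tt_mon t m || one_mon (2 * t) m) -> nterms (P i j) Q = 0%N.
  by move=> Q i j hij HQ; apply: (offzero finj fsurj p hij ht h2t).
have h21 := h12; rewrite eq_sym in h21.
have h31 := h13; rewrite eq_sym in h31.
have h41 := h14; rewrite eq_sym in h41.
have h32 := h23; rewrite eq_sym in h32.
have h42 := h24; rewrite eq_sym in h42.
have h43 := h34; rewrite eq_sym in h43.
have DToff : forall (cp : R -> bool) i, nterms (P i i) (fun m c => Toff m && cp c) =
    (k.-1 * ((e3 != 0%R) && cp e3 + (e1 != 0%R) && cp e1 + ((e2 != 0%R) && cp e2 + (e4 != 0%R) && cp e4)))%N.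
  move=> cp i; rewrite (TT i _ cp (fun _ => false)).
  - by rewrite andbF add0n sum_bb cTT cTF cFT cFF.
  - by move=> m c /andP [h _]; exact: tt_sub h.
  - by move=> b1 b2 x c hx; rewrite /Toff Toff_mo.
  - by move=> c; rewrite /Toff Toff_md.
have DTdiag : forall (cp : R -> bool) i, nterms (P i i) (fun m c => Tdiag m && cp c) =
    ((ph != 0%R) && cp ph)%N.
  move=> cp i; rewrite (TT i _ (fun _ => false) cp).
  - by rewrite big1 ?muln0 ?addn0 // => bb _; rewrite andbF.
  - by move=> m c /andP [h _]; exact: tt_sub h.
  - by move=> b1 b2 x c hx; rewrite /Tdiag Tdiag_mo.
  - by move=> c; rewrite /Tdiag Tdiag_md.
have DOne : forall (cp : R -> bool) i, nterms (P i i) (fun m c => one_mon (2 * t) m && cp c) =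
    ((e3 != 0%R) && cp e3 + (e4 != 0%R) && cp e4)%N.
  move=> cp i; rewrite (OO i _ cp).
  - by rewrite big_bool /= nT nF.
  - by move=> m c /andP [h _].
  - by move=> b c; rewrite one_G.
have OZT : forall cp i j, i != j -> nterms (P i j) (fun m c => Toff m && cp c) = 0%N.
  by move=> cp i j hij; apply: OZ => // m c /andP [h _]; rewrite (tt_sub h).
have OZD : forall cp i j, i != j -> nterms (P i j) (fun m c => Tdiag m && cp c) = 0%N.
  by move=> cp i j hij; apply: OZ => // m c /andP [h _]; rewrite (tt_sub h).
have OZO : forall cp i j, i != j -> nterms (P i j) (fun m c => one_mon (2 * t) m && cp c) = 0%N.
  by move=> cp i j hij; apply: OZ => // m c /andP [h _]; rewrite h orbT.
have DTT : forall i, nterms (P i i) (fun m _ => tt_mon t m) =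
    ((ph != 0%R) + k.-1 * ((e3 != 0%R) + (e1 != 0%R) + ((e2 != 0%R) + (e4 != 0%R))))%N.
  move=> i; rewrite (TT i _ (fun _ => true) (fun _ => true)).
  - by rewrite andbT sum_bb cTT cTF cFT cFF !andbT.
  - by [].
  - move=> b1 b2 x c hx; apply: (tt_mo finj).
    by apply/negP => /eqP [_ h _]; rewrite h eqxx in hx.
  - by move=> c; apply: (tt_mo finj); rewrite !xpair_eqE.
have kk1 : (k * k.-1 = k ^ 2 - k)%N.
  by rewrite -mulnn; case: (k) => //= n; rewrite mulnSr addnK.
split; [|split; [|split; [|split; [|split]]]].
- split => h.
  + rewrite (mx_sum (fun i j hij => OZT _ i j hij) (fun i => DToff _ i)).
    by rewrite eqxx (negbTE h31) (negbTE h21) (negbTE h41) h !andbF /= -kk1; congr (k * _)%N; apply: mul_one.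
  + rewrite (mx_sum (fun i j hij => OZT _ i j hij) (fun i => DToff _ i)).
    by rewrite eqxx (negbTE h32) (negbTE h12) (negbTE h42) h !andbF /= -kk1; congr (k * _)%N; apply: mul_one.
  + rewrite (mx_sum (fun i j hij => OZT _ i j hij) (fun i => DToff _ i)).
    by rewrite eqxx (negbTE h13) (negbTE h23) (negbTE h43) h !andbF /= -kk1; congr (k * _)%N; apply: mul_one.
  + rewrite (mx_sum (fun i j hij => OZT _ i j hij) (fun i => DToff _ i)).
    by rewrite eqxx (negbTE h34) (negbTE h14) (negbTE h24) h !andbF /= -kk1; congr (k * _)%N; apply: mul_one.
- split => h.
  + rewrite (mx_sum (fun i j hij => OZD _ i j hij) (fun i => DTdiag _ i)).
    by rewrite eqxx h /= muln1.
  + rewrite (mx_sum (fun i j hij => OZO _ i j hij) (fun i => DOne _ i)).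
    by rewrite eqxx (negbTE h43) h !andbF /=; apply: mul_one.
  + rewrite (mx_sum (fun i j hij => OZO _ i j hij) (fun i => DOne _ i)).
    by rewrite eqxx (negbTE h34) h !andbF /=; apply: mul_one.
- rewrite (nterms_mx_ext _ (Q2 := fun m c => one_mon (2 * t) m && true)); last first.
    by move=> m c; rewrite andbT.
  rewrite (mx_sum (fun i j hij => OZO _ i j hij) (fun i => DOne _ i)).
  by rewrite !andbT /chi mulnDr !(mulnC k).
- have OZt : forall i j, i != j -> nterms (P i j) (fun m _ => tt_mon t m) = 0%N.
    by move=> i j hij; apply: OZ => // m c ->.
  rewrite (mx_sum OZt DTT) -kk1 /chi.
  move: (ph != 0%R) (e1 != 0%R) (e2 != 0%R) (e3 != 0%R) (e4 != 0%R) => a1 a2 a3 a4 a5.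
  move: (nat_of_bool a1) (nat_of_bool a2) (nat_of_bool a3) (nat_of_bool a4) (nat_of_bool a5) => X1 X2 X3 X4 X5.
  rewrite mulnDr mulnA [RHS]addnC (mulnC X1 k); congr (_ + _)%N.
  by rewrite mulnC; congr (_ * _)%N; apply: ar1.
- move=> i; split.
  + transitivity (nterms (P i i) (fun m c => Toff m && true)).
      by apply: nterms_ext => m c; rewrite andbT.
    by rewrite DToff !andbT /chi subn1 mulnC; congr (_ * _)%N; apply: ar1.
  + transitivity (nterms (P i i) (fun m c => Tdiag m && true)).
      by apply: nterms_ext => m c; rewrite andbT.
    by rewrite DTdiag andbT.
  + by rewrite DOne eqxx (negbTE h43) andbT andbF addn0.
  + by rewrite DOne eqxx (negbTE h34) andbT andbF.
  + move=> m hm ho.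
    have hc : (P i i)@_m != 0 by rewrite -mcoeff_msupp.
    have [_ [b ->]] := P5 finj fsurj h2t ho hc.
    exists (f (b,i,i)); first by rewrite oneE.
    by apply/existsP; exists b; apply/existsP; exists i.
- by move=> i j hij; apply: OZ => // m c ->.
Qed.
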